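(* For every $\rho>0$ there exists $k_0$ such that for all $k\ge k_0$ the following holds. Let $G$ be a $\rho$-cut-dense graph on $n\le 100k$ vertices with $\delta(G)\ge k/2$. Then for every natural number $\ell\le 2k/5$ and every pair of distinct vertices $y,z\in V(G)$, there exists a path from $y$ to $z$ in $G$ whose length lies in the interval $[\ell+1,\ell+24000]$.
   Context: Graphs are finite and simple. For $\rho\ge0$, $G$ is $\rho$-cut-dense if there is no partition of $V(G)$ into two sets $A,B$ with $e(A,B)<\rho|A||B|$. The length of a path is its number of edges. *)

(* Defs.v *)
From mathcomp Require Import all_boot all_order all_algebra.
From mathcomp Require Import reals.
Set Implicit Arguments. Unset Strict Implicit. Unset Printing Implicit Defensive.
Import Order.TTheory GRing.Theory Num.Theory.

Definition simple_graph (T : finType) (e : rel T) : Prop :=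
  symmetric e /\ irreflexive e.

(* number of edges between A and B (ordered pairs (a,b), a in A, b in B, ab edge);
   for disjoint A B this is e(A,B). *)
Definition e_between (T : finType) (e : rel T) (A B : {set T}) : nat :=
  #|[set p : T * T | (p.1 \in A) && (p.2 \in B) && e p.1 p.2]|.

Definition cut_dense (R : realFieldType) (rho : R) (T : finType) (e : rel T) : Prop :=
  forall A : {set T},
    ~ ((e_between e A (~: A))%:R < rho * (#|A|%:R) * (#|~: A|%:R))%R.

Definition degree (T : finType) (e : rel T) (v : T) : nat := #|[set u | e v u]|.

Definition min_deg_ge_half (T : finType) (e : rel T) (k : nat) : Prop :=
  forall v : T, k <= 2 * degree e v.

Definition is_path_len (T : finType) (e : rel T) (y z : T) (len : nat) : Prop :=
  exists p : seq T, [/\ path e y p, uniq (y :: p), last y p = z & size p = len].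

(* Main.v *)
Require Import Defs.
From mathcomp Require Import all_boot all_order all_algebra.
From mathcomp Require Import reals.
From mathcomp Require Import zify lra.
Set Implicit Arguments. Unset Strict Implicit. Unset Printing Implicit Defensive.
Import Order.TTheory GRing.Theory Num.Theory.


Section Comp.
Variables (T : finType) (e : rel T).
Hypothesis esy : symmetric e.
Hypothesis eirr : irreflexive e.
Implicit Types (X Y : {set T}) (a u v w : T).

Definition rX (X : {set T}) : rel T := fun u v => [&& u \in X, v \in X & e u v].
Definition comp (X : {set T}) (a : T) : {set T} := [set u | connect (rX X) a u].

Lemma compE X a u : (u \in comp X a) = connect (rX X) a u.
Proof. by rewrite /comp inE. Qed.

Lemma path_rX_all X a p : path (rX X) a p -> all (mem X) p.
Proof. by elim: p a => //= b p IH a /andP[/and3P[_ -> _] /IH]. Qed.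

Lemma path_rX_e X a p : path (rX X) a p -> path e a p.
Proof. by move=> pp; apply: (sub_path _ pp) => u v /and3P[]. Qed.

Lemma rX_sub (X Y : {set T}) : X \subset Y -> subrel (rX X) (rX Y).
Proof. by move=> /subsetP sXY u v /and3P[uX vX euv]; rewrite /rX (sXY _ uX) (sXY _ vX). Qed.

Lemma connect_rX_sub (X Y : {set T}) a u : X \subset Y -> connect (rX X) a u -> connect (rX Y) a u.
Proof.
move=> sXY /connectP[p pp ->]; apply/connectP; exists p => //.
exact: (@sub_path T (rX X) (rX Y) (rX_sub sXY) a p pp).
Qed.

Lemma comp_refl X a : a \in comp X a.
Proof. by rewrite compE connect0. Qed.

Lemma comp_sub X a u : a \in X -> u \in comp X a -> u \in X.
Proof.
move=> aX; rewrite compE => /connectP[p pp ->].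
have := path_rX_all pp; case: (lastP p) => //= q x.
by rewrite last_rcons all_rcons => /andP[].
Qed.

Lemma comp_closed X a u w : u \in comp X a -> u \in X -> w \in X -> e u w ->
  w \in comp X a.
Proof.
rewrite !compE => au uX wX euw; apply: connect_trans au _.
by apply: connect1; rewrite /rX uX wX.
Qed.

Lemma comp_trans X a u v : u \in comp X a -> v \in comp X u -> v \in comp X a.
Proof. rewrite !compE; exact: connect_trans. Qed.

Lemma path_connect_all r a p : path r a p -> all (connect r a) p.
Proof.
elim: p a => //= b p IH a /andP[rab /IH H]; rewrite connect1 //=.
apply/allP => v /(allP H); apply: connect_trans; exact: connect1.
Qed.

Lemma comp_conn X a u : u \in comp X a -> connect (rX (comp X a)) a u.
Proof.
rewrite compE => /connectP[p pp ->]; apply/connectP; exists p => //.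
have Hall := path_connect_all pp.
have HA : all (fun v => v \in comp X a) (a :: p).
  apply/allP => v; rewrite in_cons => /orP[/eqP->|/(allP Hall) H].
    exact: comp_refl.
  by rewrite compE.
apply: (sub_in_path (P := fun v => v \in comp X a)) HA pp.
by move=> v w; rewrite /= => vC wC /and3P[_ _ evw]; rewrite /rX vC wC evw.
Qed.

Lemma connect_upath r a u : connect r a u ->
  exists q, [/\ path r a q, uniq (a :: q) & last a q = u].
Proof.
move=> /connectP[p pp ->]; case: (shortenP pp) => q pq uq _.
by exists q.
Qed.


Lemma mem_path_rX X a q v : path (rX X) a q -> v \in q -> v \in X.
Proof. by move=> /path_rX_all /allP H /H. Qed.

Lemma desc_aux X a (B : {set T}) n : forall q, path (rX X) a q -> uniq (a :: q) ->
  last a q \in B -> #|comp (X :\: [set v in belast a q]) (last a q)| <= n ->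
  exists q, [/\ path (rX X) a q, uniq (a :: q), last a q \in B &
    forall u, u \in comp (X :\: [set v in belast a q]) (last a q) -> u \in B ->
      u = last a q].
Proof.
elim: n => [|n IH] q pq uq lqB cn.
  by move: cn; rewrite leqn0 => /eqP/cards0_eq C0; have := comp_refl (X :\: [set v in belast a q]) (last a q); rewrite C0 inE.
set b := last a q in lqB cn *.
set P0 := belast a q in cn *.
case: (boolP [exists u, [&& u \in comp (X :\: [set v in P0]) b, u \in B & u != b]]); last first.
  move=> /existsPn H; exists q; split => // u uC uB; apply/eqP.
  by have := H u; rewrite uC uB /= negbK.
case/existsP => u /and3P[uC uB neq].
have cu : connect (rX (X :\: [set v in P0])) b u by rewrite -compE.
have [q1 [pq1 uq1 lq1]] := connect_upath cu.
have q1n : q1 != [::] by apply: contraNneq neq => q10; rewrite -lq1 q10.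
have aqE : a :: q = rcons P0 b by rewrite /P0 /b lastI.
have uP0b : uniq (rcons P0 b) by rewrite -aqE.
have bP0 : b \notin P0 by move: uP0b; rewrite rcons_uniq => /andP[].
have q1X : forall v, v \in q1 -> v \in X :\: [set v in P0].
  by move=> v; apply: mem_path_rX pq1.
have P1E : belast b q1 = b :: behead (belast b q1).
  by case: q1 q1n {pq1 uq1 lq1 q1X}.
have uq1' : u \notin belast b q1.
  move: uq1; rewrite lastI -lq1 rcons_uniq => /andP[] //.
have uin : u \in q1.
  rewrite -lq1; case: q1 q1n {pq1 uq1 lq1 q1X P1E uq1'} => //= x s _; exact: mem_last.
apply: (IH (q ++ q1)).
- rewrite cat_path pq /=; apply: (sub_path _ pq1).
  by apply: rX_sub; apply: subsetDl.
- rewrite -cat_cons aqE cat_rcons cat_uniq.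
  move: uP0b; rewrite rcons_uniq => /andP[_ ->] /=.
  move: uq1 => /= /andP[-> ->]; rewrite negb_or bP0 /= andbT.
  apply/hasPn => v /q1X; rewrite !inE => /andP[] //.
- by rewrite last_cat -/b lq1.
rewrite last_cat -/b lq1.
set C := comp _ b in cn. set C' := comp _ u.
have sub : C' \proper C.
  apply/properP; split.
    apply/subsetP => v; rewrite compE => cv.
    apply: comp_trans uC _; rewrite compE.
    apply: connect_rX_sub cv; apply: setDS.
    by apply/subsetP => w; rewrite !inE belast_cat mem_cat => ->.
  exists b; first exact: comp_refl.
  apply/negP => bC'.
  have : b \in X :\: [set v in belast a (q ++ q1)].
    apply: (comp_sub _ bC').
    rewrite !inE belast_cat mem_cat negb_or -/P0 -/b.
    by have := q1X _ uin; rewrite !inE => /andP[-> ->]; rewrite uq1'.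
  by rewrite !inE belast_cat mem_cat -/P0 -/b P1E mem_head orbT.
by rewrite -ltnS; apply: leq_trans cn; apply: proper_card.
Qed.

Lemma desc X a (B : {set T}) :
  (exists u, connect (rX X) a u && (u \in B)) ->
  exists q, [/\ path (rX X) a q, uniq (a :: q), last a q \in B &
    forall u, u \in comp (X :\: [set v in belast a q]) (last a q) -> u \in B ->
      u = last a q].
Proof.
move=> [u0 /andP[cu0 u0B]].
have [q [pq uq lq]] := connect_upath cu0.
by apply: (desc_aux (n := #|T|) pq uq); rewrite ?lq // max_card.
Qed.

End Comp.


Section Seqs.
Variables (T : eqType).

Lemma last_drop (s : seq T) i x x' : i < size s -> last x (drop i s) = last x' s.
Proof.
elim: s i x x' => // a s IH [|i] x x' //= H; exact: IH.
Qed.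

Lemma sorted_drop (r : rel T) (s : seq T) i : sorted r s -> sorted r (drop i s).
Proof.
elim: s i => // a s IH [|i] //= H; apply: IH; exact: path_sorted H.
Qed.

Lemma mem_drop_find (p : pred T) (s : seq T) w : w \in s -> p w -> w \in drop (find p s) s.
Proof.
elim: s => // a s IH; rewrite in_cons /=; case: ifP => pa.
  by move=> H _; rewrite drop0 in_cons.
by case/orP => [/eqP-> | /IH H /H //]; rewrite pa.
Qed.

Lemma path_drop_find (r : rel T) b (s : seq T) : sorted r s -> has (r b) s ->
  path r b (drop (find (r b) s) s).
Proof.
move=> ss hs; rewrite (drop_nth b); last by rewrite -has_find.
rewrite /= nth_find //=.
have := sorted_drop (find (r b) s) ss; rewrite (drop_nth b) //; by rewrite -has_find.
Qed.

Lemma split_last (p : pred T) a (s : seq T) : has p (a :: s) ->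
  exists s1 s2, [/\ s = s1 ++ s2, p (last a s1) & ~~ has p s2].
Proof.
elim/last_ind: s => [|s x IH] /=.
  by rewrite orbF => pa; exists [::], [::].
rewrite -cats1 has_cat /= orbF orbA; case: (boolP (p x)) => px.
  by move=> _; exists (s ++ [:: x]), [::]; rewrite cats0 last_cat /=.
rewrite orbF => /IH [s1 [s2 [-> H1 H2]]]; exists s1, (s2 ++ [:: x]).
by rewrite catA has_cat /= (negbTE px) (negbTE H2).
Qed.

Lemma path_rev_sym (r : rel T) a q : symmetric r -> path r a q ->
  path r (last a q) (rev (belast a q)).
Proof.
move=> sr pq; rewrite rev_path; apply: (sub_path _ pq) => u v; by rewrite sr.
Qed.

End Seqs.


Lemma sorted_cat_last (T : eqType) (r : rel T) (s1 s2 : seq T) x :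
  s1 != [::] -> sorted r s1 -> path r (last x s1) s2 -> sorted r (s1 ++ s2).
Proof. by case: s1 => // a s1' _ /= H1 H2; rewrite cat_path H1 H2. Qed.

Lemma inSs (T : finType) (s : seq T) x : (x \in [set v in s]) = (x \in s).
Proof. by rewrite inE. Qed.

Section RL.
Variables (T : finType) (e : rel T).
Hypothesis esy : symmetric e.
Hypothesis eirr : irreflexive e.
Variables (y z : T) (k : nat).
Hypothesis hdeg : forall v, k <= 2 * #|[set u | e v u]|.
Hypothesis sep : forall (K : {set T}) v w, (exists u, u \in K) -> w \notin K -> w != v ->
  (forall u x, u \in K -> e u x -> (x \in K) || (x == v)) -> False.

Record Inv (fp zs : seq T) (D : {set T}) : Prop := {
  i_pf : path e y fp;
  i_uf : uniq (y :: fp);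
  i_zn : zs != [::];
  i_pz : sorted e zs;
  i_uz : uniq zs;
  i_lz : last z zs = z;
  i_dfz : forall u, u \in y :: fp -> u \notin zs;
  i_fD : last y fp \in D;
  i_DF : forall u, u \in D -> u \in y :: fp -> u = last y fp;
  i_Dz : forall u, u \in D -> u \notin zs;
  i_cl : forall u w, u \in D -> u != last y fp -> e u w -> (w \in D) || (w \in zs);
  i_clf : forall w, e (last y fp) w -> [|| w \in D, w \in zs | w \in y :: fp];
  i_ex : exists u, connect (rX e D) (last y fp) u && has (e u) zs }.

Lemma RL n : forall fp zs (D : {set T}), #|D| <= n -> Inv fp zs D ->
  exists p, [/\ path e y p, uniq (y :: p), last y p = z & k <= 2 * size p].
Proof.
elim: n => [|n IH] fp zs D cD I.
  by move: cD; rewrite leqn0 => /eqP/cards0_eq D0; have := i_fD I; rewrite D0 inE.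
set f := last y fp.
have fD : f \in D := i_fD I.
have hex : exists u, connect (rX e D) f u && (u \in [set u | has (e u) zs]).
  by have [u /andP[cu hu]] := i_ex I; exists u; rewrite inE cu.
have [q [pq uq qB Fin1]] := desc hex.
set b := last f q in qB Fin1.
set P0 := belast f q in Fin1.
set E := comp e (D :\: [set v in P0]) b in Fin1.
have fqE : f :: q = rcons P0 b by rewrite /P0 /b lastI.
have uP0b : uniq (rcons P0 b) by rewrite -fqE.
have bP0 : b \notin P0 by move: uP0b; rewrite rcons_uniq => /andP[].
have uP0 : uniq P0 by move: uP0b; rewrite rcons_uniq => /andP[].
have qD : forall v, v \in q -> v \in D by move=> v; apply: mem_path_rX pq.
have fqD : forall v, v \in f :: q -> v \in D.
  by move=> v; rewrite in_cons => /orP[/eqP-> | /qD].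
have bD : b \in D by apply: fqD; apply: mem_last.
have P0D : forall v, v \in P0 -> v \in D by move=> v /mem_belast /fqD.
have bE : b \in E by apply: comp_refl.
have bX : b \in D :\: [set v in P0] by rewrite !inE bD bP0.
have ED : forall u, u \in E -> (u \in D) && (u \notin P0).
  by move=> u /(comp_sub bX); rewrite !inE => /andP[-> ->].
have Ecl : forall u w, u \in E -> e u w -> w \in D -> w \notin P0 -> w \in E.
  move=> u w uE euw wD wP0.
  have uX : u \in D :\: [set v in P0] by have := ED u uE; rewrite !inE andbC.
  by apply: (comp_closed uE uX) euw; rewrite !inE wD wP0.
have fPb : (f \in P0) || (b == f).
  by rewrite /P0 /b; case: (q) => [|x q'] /=; rewrite ?eqxx ?orbT ?in_cons ?eqxx.
have uB : forall u, u \in E -> has (e u) zs -> u = b.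
  by move=> u uE hu; apply: (Fin1 u uE); rewrite inE.
have zzs : z \in zs.
  have := i_lz I; have := i_zn I; case: (zs) => // a t _ /= <-; exact: mem_last.
have Dz : forall u, u \in D -> u \notin zs := i_Dz I.
have hb : has (e b) zs by move: qB; rewrite inE.
set i := find (e b) zs.
have isz : i < size zs by rewrite -has_find.
case: (boolP [exists u, (u \in E) && (u != b)]); last first.
  move=> /existsPn noE.
  have Eb : forall u, u \in E -> u = b.
    by move=> u uE; apply/eqP; have := noE u; rewrite uE /= negbK.
  exists (fp ++ q ++ drop i zs); split.
  - rewrite cat_path (i_pf I) /= -/f cat_path (path_rX_e pq) /= -/b.
    exact: path_drop_find (i_pz I) hb.
  - rewrite -cat_cons cat_uniq (i_uf I) /= cat_uniq.
    move: uq => /= /andP[fq ->]; rewrite drop_uniq ?(i_uz I) // andbT /=.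
    apply/andP; split.
      apply/hasPn => v; rewrite mem_cat => /orP[vq|vd].
        apply/negP => vF; have := i_DF I (qD _ vq) vF; rewrite -/f => vf.
        by move: fq; rewrite -vf vq.
      by apply/negP => /(i_dfz I); rewrite (mem_drop vd).
    apply/hasPn => v vd; apply/negP => /qD /Dz; by rewrite (mem_drop vd).
  - by rewrite last_cat -/f last_cat -/b (@last_drop _ zs i _ z isz) (i_lz I).
  - apply: leq_trans (hdeg b) _; rewrite leq_mul2l /=.
    have sub : [set u | e b u] \subset [pred u | u \in belast y fp ++ P0 ++ drop i zs].
      apply/subsetP => w; rewrite inE => ebw; rewrite inE !mem_cat.
      have H : [|| w \in D, w \in zs | (b == f) && (w \in y :: fp)].
        case: (eqVneq b f) => [bf | bnf].
          by have := i_clf I; rewrite -/f -bf => /(_ _ ebw).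
        by have := i_cl I bD bnf ebw; rewrite andFb orbF.
      case/or3P: H => [wD | wz | /andP[/eqP bf wF]].
      + case: (boolP (w \in P0)) => wP0; first by apply/or3P; constructor 2.
        have := Eb w (Ecl b w bE ebw wD wP0) => wb.
        by move: ebw; rewrite wb eirr.
      + by rewrite (mem_drop_find wz ebw) !orbT.
      + have wnf : w != f by apply: contraTneq ebw => ->; rewrite bf eirr.
        move: wF; rewrite lastI mem_rcons in_cons -/f (negbTE wnf) /= => ->.
        by [].
    apply: leq_trans (subset_leq_card sub) _.
    apply: leq_trans (card_size _) _.
    by rewrite !size_cat size_belast /P0 size_belast size_drop.
case/existsP => u0 /andP[u0E u0b].
set B2 := [set u | [&& u \in E, u != b & has (e u) P0]].
have unf : forall u, u \in E -> u != b -> u != f.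
  move=> u uE ub; case/orP: fPb => [fP0 | /eqP bf]; last by rewrite -bf.
  by apply/eqP => uf; move: (ED u uE); rewrite uf fP0 andbF.
have hB2 : exists u, connect (rX e E) b u && (u \in B2).
  case: (boolP [exists u, u \in B2]) => [/existsP[u uB2] | /existsPn nB2].
    exists u; rewrite uB2 andbT; apply: comp_conn.
    by move: uB2; rewrite inE => /and3P[].
  exfalso; apply: (sep (K := E :\ b) (v := b) (w := z)).
  - by exists u0; rewrite in_setD1 u0b u0E.
  - rewrite in_setD1 negb_and negbK; apply/orP; right; apply/negP => zE.
    by have /andP[zD _] := ED z zE; move: (Dz z zD); rewrite zzs.
  - by apply: contraTneq zzs => ->; apply: Dz.
  - move=> u x; rewrite in_setD1 => /andP[ub uE] eux.
    have /andP[uD uP0n] := ED u uE.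
    case/orP: (i_cl I uD (unf u uE ub) eux) => [xD | xz].
      case: (boolP (x \in P0)) => xP0.
        have := nB2 u; rewrite inE uE ub /=.
        by have -> : has (e u) P0 by apply/hasP; exists x.
      by rewrite in_setD1 (Ecl u x uE eux xD xP0) andbT orNb.
    have := uB u uE (introT hasP (ex_intro2 _ _ x xz eux)).
    by move/eqP; rewrite (negbTE ub).
have [q2 [pq2 uq2 q2B Fin2]] := desc hB2.
set b' := last b q2 in q2B Fin2.
set P2 := belast b q2 in Fin2.
set E' := comp e (E :\: [set v in P2]) b' in Fin2.
have /and3P[b'E b'b hb'P0] : [&& b' \in E, b' != b & has (e b') P0] by move: q2B; rewrite inE.
have q2n : q2 != [::] by apply: contraNneq b'b => q20; rewrite /b' q20.
have bq2E : b :: q2 = rcons P2 b' by rewrite /P2 /b' lastI.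
have uP2b' : uniq (rcons P2 b') by rewrite -bq2E.
have b'P2 : b' \notin P2 by move: uP2b'; rewrite rcons_uniq => /andP[].
have uP2 : uniq P2 by move: uP2b'; rewrite rcons_uniq => /andP[].
have q2E : forall v, v \in q2 -> v \in E by move=> v; apply: mem_path_rX pq2.
have P2E : forall v, v \in P2 -> v \in E.
  by move=> v /mem_belast; rewrite in_cons => /orP[/eqP-> | /q2E].
have bP2 : b \in P2 by rewrite /P2; case: (q2) q2n => //= x t _; exact: mem_head.
have b'X : b' \in E :\: [set v in P2] by rewrite in_setD b'E andbT inSs.
have E'E : forall u, u \in E' -> (u \in E) && (u \notin P2).
  by move=> u /(comp_sub b'X); rewrite in_setD inSs => /andP[-> ->].
have [s P0E] : exists s, P0 = f :: s.
  by move: hb'P0; rewrite /P0; case: (q) => [|x t] //= _; exists (belast x t).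
have fP0 : f \in P0 by rewrite P0E mem_head.
have hfs : has (e b') (f :: s) by rewrite -P0E.
have [s1 [s2 [sE eb's1 hs2]]] := split_last hfs.
have qE : q = rcons s b by move: fqE; rewrite P0E rcons_cons => [[]].
have ps1 : path e f s1.
  by move: (path_rX_e pq); rewrite qE sE rcons_cat cat_path => /andP[].
have s1P0 : forall v, v \in s1 -> v \in P0.
  by move=> v vs; rewrite P0E sE in_cons mem_cat vs orbT.
have s1q : forall v, v \in s1 -> v \in q.
  by move=> v vs; rewrite qE sE rcons_cat mem_cat vs.
have fq : f \notin q by move: uq => /= /andP[].
have uqq : uniq q by move: uq => /= /andP[].
have us1 : uniq s1 by move: uqq; rewrite qE sE rcons_cat cat_uniq => /andP[].
have rP2 : path e b' (rev P2) by apply: path_rev_sym esy (path_rX_e pq2).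
have [t2 P2E'] : exists t2, P2 = b :: t2.
  by rewrite /P2; case: (q2) q2n => //= x t _; exists (belast x t).
have lastrevP2 : forall x, last x (rev P2) = b by move=> x; rewrite P2E' rev_cons last_rcons.
have [h [t rE]] : exists h t, rev P2 = h :: t.
  by rewrite P2E' rev_cons; case: (rev t2) => [|h t] /=; [exists b, [::] | exists h, (rcons t b)].
have revP2n : rev P2 != [::] by rewrite rE.
have /andP[b'D b'P0] := ED b' b'E.
have lfp' : last y (fp ++ s1 ++ [:: b']) = b' by rewrite last_cat last_cat.
have hdz := path_drop_find (i_pz I) hb.
apply: (IH (fp ++ s1 ++ [:: b']) (rev P2 ++ drop i zs) E').
  have sub : E' \proper D.
    apply/properP; split.
      by apply/subsetP => u /E'E /andP[/ED /andP[]].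
    exists f => //; apply/negP => /E'E /andP[/ED /andP[_]]; by rewrite fP0.
  by rewrite -ltnS; apply: leq_trans cD; exact: proper_card.
constructor.
- by rewrite cat_path (i_pf I) -/f cat_path ps1 /= andbT esy.
- rewrite -cat_cons cat_uniq (i_uf I) /= cats1 rcons_uniq us1 andbT.
  apply/andP; split.
    apply/hasPn => v; rewrite mem_rcons in_cons => /orP[/eqP-> | vs1].
      apply/negP => /(i_DF I b'D); rewrite -/f => bf.
      by move: b'P0; rewrite bf fP0.
    apply/negP => /(i_DF I (P0D v (s1P0 v vs1))); rewrite -/f => vf.
    by move: fq; rewrite -vf (s1q v vs1).
  by apply/negP => /s1P0; apply/negP.
- by rewrite rE.
- apply: (sorted_cat_last (x := b)) revP2n (path_sorted rP2) _.
  by rewrite lastrevP2.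
- rewrite cat_uniq rev_uniq uP2 drop_uniq ?(i_uz I) // andbT /=.
  apply/hasPn => v /mem_drop vz; rewrite mem_rev; apply/negP => /P2E vE.
  by have /andP[vD _] := ED v vE; move: (Dz v vD); rewrite vz.
- by rewrite last_cat (@last_drop _ zs i _ z isz) (i_lz I).
- move=> u; rewrite -cat_cons !mem_cat mem_rev => H; apply/negP => /orP[uinP2 | ud].
    have /andP[uD uP0n] := ED u (P2E u uinP2).
    case/or3P: H => [uF | us1' | ub'].
    + by move: uP0n; rewrite (i_DF I uD uF) -/f fP0.
    + by move: uP0n; rewrite (s1P0 u us1').
    + by move: b'P2; rewrite inE in ub'; rewrite -(eqP ub') uinP2.
  have uz := mem_drop ud.
  case/or3P: H => [uF | us1' | ub'].
  + by move: (i_dfz I uF); rewrite uz.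
  + by move: (Dz u (P0D u (s1P0 u us1'))); rewrite uz.
  + by rewrite inE in ub'; move: (Dz b' b'D); rewrite -(eqP ub') uz.
- by rewrite lfp'; exact: comp_refl.
- move=> u uE'; rewrite lfp' -cat_cons !mem_cat => H.
  have /andP[uE uP2n] := E'E u uE'.
  have /andP[uD uP0n] := ED u uE.
  case/or3P: H => [uF | us1' | ub'].
  + by move: uP0n; rewrite (i_DF I uD uF) -/f fP0.
  + by move: uP0n; rewrite (s1P0 u us1').
  + by rewrite inE in ub'; apply/eqP.
- move=> u uE'; rewrite mem_cat mem_rev negb_or.
  have /andP[uE ->] := E'E u uE'.
  have /andP[uD _] := ED u uE.
  by apply/negP => /mem_drop; apply/negP; apply: Dz.
- move=> u w uE'; rewrite lfp' => ub' euw.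
  have /andP[uE uP2n] := E'E u uE'.
  have /andP[uD uP0n] := ED u uE.
  have ub : u != b by apply: contraNneq uP2n => ->.
  case/orP: (i_cl I uD (unf u uE ub) euw) => [wD | wz].
    case: (boolP (w \in P0)) => wP0.
      have uB2 : u \in B2 by rewrite inE uE ub /=; apply/hasP; exists w.
      by move: ub'; rewrite (Fin2 u uE' uB2) eqxx.
    have wE := Ecl u w uE euw wD wP0.
    case: (boolP (w \in P2)) => wP2.
      by rewrite mem_cat mem_rev wP2 orbT.
    apply/orP; left; apply: (comp_closed uE') _ _ euw.
      by rewrite in_setD uE andbT inSs.
    by rewrite in_setD wE andbT inSs.
  by move: ub; rewrite (uB u uE (introT hasP (ex_intro2 _ _ w wz euw))) eqxx.
- rewrite lfp' => w eb'w.
  have b'nf := unf b' b'E b'b.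
  case/orP: (i_cl I b'D b'nf eb'w) => [wD | wz].
    case: (boolP (w \in P0)) => wP0.
      move: wP0; rewrite P0E sE in_cons mem_cat => /or3P[/eqP wf | ws1 | ws2].
      + by apply/or3P; constructor 3; rewrite -cat_cons mem_cat wf /f mem_last.
      + by rewrite -cat_cons !mem_cat ws1 !orbT.
      + by move: hs2; rewrite (introT hasP (ex_intro2 _ _ w ws2 eb'w)).
    have wE := Ecl b' w b'E eb'w wD wP0.
    case: (boolP (w \in P2)) => wP2.
      by rewrite mem_cat mem_rev wP2 orbT.
    apply/orP; left; apply: (comp_closed (comp_refl _ _ _)) _ _ eb'w.
      by rewrite in_setD b'E andbT inSs.
    by rewrite in_setD wE andbT inSs.
  by move: b'b; rewrite (uB b' b'E (introT hasP (ex_intro2 _ _ w wz eb'w))) eqxx.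
- exists b'; rewrite lfp' connect0 /=; apply/hasP; exists h.
    by rewrite mem_cat rE mem_head.
  by move: rP2; rewrite rE /= => /andP[].
Qed.

Hypothesis yz : y != z.

Lemma long_path : exists p, [/\ path e y p, uniq (y :: p), last y p = z & k <= 2 * size p].
Proof.
set D := [set: T] :\ z.
have yD : y \in D by rewrite in_setD1 in_setT andbT yz.
apply: (RL (n := #|T|) (fp := [::]) (zs := [:: z]) (D := D)); first exact: max_card.
constructor => //=.
- by move=> u; rewrite !inE => /eqP->.
- by move=> u _; rewrite inE => /eqP.
- by move=> u; rewrite !inE andbT.
- by move=> u w _ _ _; rewrite !inE andbT orNb.
- by move=> w _; rewrite !inE andbT; case: (w == z).
- set K := comp e D y.
  case: (boolP [exists u, (u \in K) && e u z]) => [/existsP[u /andP[uK euz]] | /existsPn H].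
    by exists u; rewrite -compE uK /= euz.
  exfalso; apply: (sep (K := K) (v := y) (w := z)).
  + by exists y; apply: comp_refl.
  + by apply/negP => /(comp_sub yD); rewrite !inE eqxx.
  + by rewrite eq_sym.
  + move=> u x uK eux; case: (eqVneq x z) => [xz | xnz].
      by move: (H u); rewrite uK -xz eux.
    apply/orP; left; apply: (comp_closed uK) _ _ eux.
      exact: (comp_sub yD uK).
    by rewrite !inE xnz.
Qed.

End RL.


Lemma last_take_nth (T : Type) (q : seq T) x y n : n <= size q -> last x (take n q) = nth y (x :: q) n.
Proof. by elim: q x n => [|a q IH] x [|n] //= H; apply: IH. Qed.

Lemma path_drop_nth (T : Type) (r : rel T) x y q n : path r x q -> path r (nth y (x :: q) n) (drop n q).
Proof.
elim: q x n => [|a q IH] x [|n] //= /andP[_ H]; exact: IH.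
Qed.

Section Count.
Variables (T : finType) (A : nat -> {set T}).

Fixpoint Un M : {set T} := if M is M'.+1 then A M' :|: Un M' else set0.

Lemma Un_mem M u : u \in Un M -> exists2 i, i < M & u \in A i.
Proof.
elim: M => [|M IH] /=; first by rewrite inE.
rewrite in_setU => /orP[uA | /IH [i iM uAi]]; first by exists M.
by exists i => //; apply: ltnW.
Qed.

Lemma count_disj M k : (forall i j u, i < j -> j < M -> u \in A i -> u \in A j -> False) ->
  (forall i, i < M -> k <= 10 * #|A i|) -> M * k <= 10 * #|T|.
Proof.
move=> Hd Hk; apply: (@leq_trans (10 * #|Un M|)); last by rewrite leq_mul2l max_card orbT.
elim: M Hd Hk => [|M IH] Hd Hk //=.
have disj : A M :&: Un M = set0.
  apply/setP => u; rewrite !inE; apply/negP => /andP[uA /Un_mem [i iM uAi]].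
  exact: (Hd i M u iM (ltnSn M) uAi uA).
rewrite cardsU disj cards0 subn0 mulnDr mulSn; apply: leq_add; first exact: Hk.
apply: IH => [i j u ij jM | i iM]; first by apply: Hd => //; apply: ltnW.
by apply: Hk; apply: ltnW.
Qed.

End Count.

Section Short.
Variables (T : finType) (e : rel T).
Hypothesis esy : symmetric e.
Variables (S : {set T}) (k : nat).
Hypothesis kpos : 0 < k.
Hypothesis hT : #|T| <= 100 * k.
Let r := rX e (~: S).
Hypothesis hdeg : forall v, v \notin S -> k <= 10 * #|[set u | r v u]|.

Lemma rsym : symmetric r.
Proof. by move=> u v; rewrite /r /rX esy andbCA. Qed.

Lemma shortcut x q : path r x q -> 3000 <= size q ->
  exists q', [/\ path r x q', last x q' = last x q & size q' < size q].
Proof.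
move=> pq sq.
pose c (i : nat) := nth x (x :: q) (3 * i).
case: (boolP [exists i : 'I_1001, exists j : 'I_1001, exists u, [&& i < j, r (c i) u & r (c j) u]]).
  case/existsP => i /existsP[j /existsP[u /and3P[ij riu rju]]].
  have jo := ltn_ord j.
  have i3 : 3 * i <= size q by lia.
  have j3 : 3 * j <= size q by lia.
  exists (take (3 * i) q ++ u :: drop (3 * j) (x :: q)); split.
  - rewrite cat_path take_path //= (@last_take_nth _ q x x) // -/(c i) riu /=.
    rewrite (drop_nth x) /=; last by rewrite ltnS.
    rewrite -/(c j) rsym rju /=.
    have := path_drop_nth x (3 * j) pq; rewrite -/(c j).
    by case: (3 * j) => // n; rewrite /= drop0.
  - rewrite last_cat /= (@last_drop _ (x :: q) (3 * j) _ x) //=; by rewrite ltnS.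
  - rewrite size_cat (size_takel i3) /= size_drop /=.
    move: ij i3 j3; move: (nat_of_ord i) (nat_of_ord j) => a b0; lia.
move=> /existsPn H; exfalso.
have xS : x \in ~: S.
  by move: pq sq; case: (q) => [|a t] //= /andP[/and3P[]].
have allS : forall v, v \in x :: q -> v \notin S.
  move=> v; rewrite in_cons => /orP[/eqP-> | vq]; first by rewrite -in_setC.
  by rewrite -in_setC; apply: (mem_path_rX pq vq).
have HH : 1001 * k <= 10 * #|T| -> False by move=> H1; lia.
apply: HH; apply: (@count_disj T (fun i => [set u | r (c i) u]) 1001 k).
  move=> i j u ij jM; rewrite !inE => riu rju.
  have iM : i < 1001 by apply: ltn_trans ij jM.
  move: (H (Ordinal iM)) => /existsPn /(_ (Ordinal jM)) /existsPn /(_ u).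
  by rewrite /= ij riu rju.
move=> i iM; apply: hdeg; apply: allS; rewrite /c; apply: mem_nth => /=.
by rewrite ltnS; apply: leq_trans sq; lia.
Qed.

Lemma short_walk n x z : forall q, path r x q -> last x q = z -> size q <= n ->
  exists q', [/\ path r x q', uniq (x :: q'), last x q' = z & size q' < 3000].
Proof.
elim: n => [|n IH] q pq lq sq.
  rewrite -lq; case: (shortenP pq) => q' pq' uq' sub; exists q'; split => //.
  by move: sq; rewrite leqn0 => /eqP q0; move: sub; rewrite (size0nil q0) => sub;
     case: q' {pq' uq'} sub => // a t /(_ a (mem_head _ _)).
case: (ltnP (size q) 3000) => sq3.
  rewrite -lq; case: (shortenP pq) => q' pq' uq' sub; exists q'; split => //.
  by apply: leq_ltn_trans sq3; apply: uniq_leq_size => //; move: uq' => /= /andP[].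
have [q' [pq' lq' sq']] := shortcut pq sq3.
apply: (IH q' pq'); first by rewrite lq'.
by rewrite -ltnS; apply: leq_trans sq' sq.
Qed.

End Short.

Section SepCut.
Variables (R : realType) (rho : R) (T : finType) (e : rel T) (k : nat).
Hypothesis hrho : (0 < rho)%R.
Hypothesis esy : symmetric e.
Hypothesis eirr : irreflexive e.
Hypothesis hcut : cut_dense rho e.
Hypothesis hdeg : forall v, k <= 2 * degree e v.
Hypothesis hk : (2 < rho * k%:R)%R.

Lemma sep_cut (K : {set T}) v w : (exists u, u \in K) -> w \notin K -> w != v ->
  (forall u x, u \in K -> e u x -> (x \in K) || (x == v)) -> False.
Proof.
move=> [u0 u0K] wK wv cl.
have eb : e_between e K (~: K) <= #|K|.
  rewrite /e_between; apply: (@leq_trans #|setX K [set v]|); last by rewrite cardsX cards1 muln1.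
  apply: subset_leq_card; apply/subsetP => -[a b]; rewrite !inE /= => /andP[/andP[aK bK] eab].
  by move: (cl a b aK eab); rewrite (negbTE bK) /= => ->; rewrite aK.
have nc : (degree e w).+1 <= #|~: K|.
  have sub : w |: [set u | e w u] \subset ~: K.
    apply/subsetP => u; rewrite !inE => /orP[/eqP-> // | ewu].
    apply/negP => uK; have := cl u w uK; rewrite esy => /(_ ewu).
    by rewrite (negbTE wK) (negbTE wv).
  by have := subset_leq_card sub; rewrite cardsU1 inE eirr.
have Kpos : 0 < #|K| by apply/card_gt0P; exists u0.
have hw := hdeg w.
have h1 : ((e_between e K (~: K))%:R <= (#|K|%:R : R))%R by rewrite ler_nat.
have h2 : (1 <= (#|K|%:R : R))%R by rewrite ler1n.
have h3 : ((k%:R : R) + 2 <= 2 * #|~: K|%:R)%R.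
  have : k + 2 <= 2 * #|~: K| by lia.
  by rewrite -(ler_nat R) natrD natrM.
have h4 := hcut (A := K).
have h5 : (rho * #|K|%:R * #|~: K|%:R <= (e_between e K (~: K))%:R)%R.
  by rewrite leNgt; apply/negP.
set c : R := ((e_between e K (~: K))%:R)%R in h1 h5.
set a : R := (#|K|%:R)%R in h1 h2 h5.
set b : R := (#|~: K|%:R)%R in h3 h5.
have hk' := hk.
set kk : R := (k%:R)%R in h3 hk'.
clearbody c a b kk; clear h4.
have hr := hrho.
have h6 : (1 < rho * b)%R.
  have : (rho * (kk + 2) <= rho * (2 * b))%R by rewrite ler_pM2l.
  rewrite mulrDr mulrCA => H.
  have H2 : (2 + rho * 2 < 2 * (rho * b))%R by lra.
  lra.
have h7 : (a * 1 < a * (rho * b))%R by rewrite ltr_pM2l //; lra.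
have h8 : (a * (rho * b) = rho * a * b)%R by rewrite mulrA (mulrC a rho).
rewrite mulr1 h8 in h7.
lra.
Qed.

End SepCut.

Unset Implicit Arguments.

Theorem lemma7p8 (R : realType) (rho : R) (hrho : (0 < rho)%R) :
  exists k0 : nat, forall k : nat, k0 <= k ->
    forall (T : finType) (e : rel T),
      simple_graph e ->
      cut_dense rho e ->
      #|T| <= 100 * k ->
      min_deg_ge_half e k ->
      forall l : nat, 5 * l <= 2 * k ->
      forall y z : T, y != z ->
        exists len : nat, [/\ l + 1 <= len, len <= l + 24000 & is_path_len e y z len].
Proof.
exists (maxn 10 (Num.Def.archi_bound (2 / rho))) => k hk T e [esy eirr] hcut hT hdeg l hl y z yz.
have k10 : 10 <= k by apply: leq_trans hk; rewrite leq_maxl.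
have hkR : (2 < rho * k%:R)%R.
  have h0 : (0 <= 2 / rho)%R by rewrite divr_ge0 // ltW.
  have hb := archi_boundP h0.
  have hb2 : ((Num.Def.archi_bound (2 / rho))%:R <= (k%:R : R))%R.
    by rewrite ler_nat; apply: leq_trans hk; rewrite leq_maxr.
  have e2 : (2 / rho * rho = 2)%R by rewrite divfK // gt_eqF.
  rewrite mulrC -{1}e2 ltr_pM2r //; exact: lt_le_trans hb hb2.
have sep := @sep_cut R rho T e k hrho esy eirr hcut hdeg hkR.
have [p [pp up lp sp]] := @long_path T e esy eirr y z k hdeg sep yz.
have spl : l < size p by lia.
set s := y :: p.
set S := [set u in take l s].
set x := nth y s l.
have ls : l < size s by rewrite /s /=; lia.
have sE : s = take l s ++ x :: drop l p.
  by rewrite -[drop l p]/(drop l.+1 s) -(drop_nth y ls) cat_take_drop.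
have us : uniq s := up.
have dS : forall u, u \in x :: drop l p -> u \notin S.
  move=> u ud; rewrite inE; apply/negP => ut.
  by move: us; rewrite {1}sE cat_uniq => /and3P[_ /hasPn /(_ u ud) /negP].
have hdegS : forall v, v \notin S -> k <= 10 * #|[set u | rX e (~: S) v u]|.
  move=> v vS.
  have sub : [set u | e v u] \subset [set u | rX e (~: S) v u] :|: S.
    apply/subsetP => u; rewrite !inE => evu.
    case: (boolP (u \in take l s)) => uS; first by rewrite orbT.
    by move: vS; rewrite /rX !inE => ->; rewrite (negbTE uS) evu.
  have c1 := subset_leq_card sub.
  have c2 : #|[set u | rX e (~: S) v u] :|: S| <= #|[set u | rX e (~: S) v u]| + #|S|.
    by rewrite cardsU leq_subr.
  have c3 : #|S| <= l.
    rewrite /S cardsE; apply: leq_trans (card_size _) _; rewrite size_take; case: ifP => //; lia.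
  have := hdeg v; rewrite /degree; lia.
have pdx : path e x (drop l p) := path_drop_nth y l pp.
have pdxS : path (rX e (~: S)) x (drop l p).
  apply: (sub_in_path (P := fun u => u \notin S)) pdx.
    move=> u v uS vS euv; rewrite /rX !in_setC euv andbT.
    by apply/andP; split; [exact: uS | exact: vS].
  by apply/allP => u /dS.
have ldz : last x (drop l p) = z by rewrite (@last_drop _ p l x y spl) lp.
have kpos : 0 < k by lia.
have [q [pq uq lq sq]] := short_walk esy kpos hT hdegS pdxS ldz (leqnn _).
have xz : x != z.
  rewrite -lp /x /s; have -> : last y p = nth y (y :: p) (size p).
    by have := nth_last y (y :: p); rewrite /= => <-.
  rewrite (nth_uniq y ls) //=; lia.
have qn : 0 < size q by case: (q) lq xz => //= <-; rewrite eqxx.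
exists (l + size q); split.
- by rewrite leq_add2l.
- rewrite leq_add2l; apply: leq_trans (ltnW sq) _; exact: isT.
- exists (take l p ++ q); split.
  + rewrite cat_path; apply/andP; split; first exact: take_path.
    rewrite (@last_take_nth _ p y y l (ltnW spl)); exact: path_rX_e pq.
  + rewrite -cat_cons.
    have -> : y :: take l p = rcons (take l s) x by rewrite -(take_nth y ls).
    rewrite cat_uniq rcons_uniq take_uniq // andbT.
    move: uq => /= /andP[xq ->]; rewrite andbT.
    apply/andP; split.
      by move: us; rewrite {1}sE cat_uniq => /and3P[_ /hasPn /(_ x (mem_head _ _))].
    apply/hasPn => v vq; rewrite mem_rcons in_cons negb_or.
    apply/andP; split; first by apply: contraNneq xq => <-.
    have := mem_path_rX pq vq; rewrite inE => vS.
    by move: vS; rewrite /S inE.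
  + by rewrite last_cat (@last_take_nth _ p y y l (ltnW spl)).
  + by rewrite size_cat (size_takel (ltnW spl)).
Qed.
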